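(* Let $p$ be an odd prime, $r\ge3$ with $p\nmid r$, $d\ge2$, and let $G=V\rtimes_\psi D$ with $V=\mathbb{Z}_p^d$, $D=\mathrm{D}_{2r}$ and $\psi:D\to\mathrm{GL}(V)$ an irreducible representation over $\mathbb{F}_p$. Let $x,y\in D$ be involutions with $D=\langle x,y\rangle$, and let $v,v'$ be non-identity elements of $\mathrm{C}_V(x)$. Then $\mathsf{RotaMap}(G,vx,y)\cong\mathsf{RotaMap}(G,v'x,y)$.
   Context: $\mathrm{D}_{2r}$ is the dihedral group of order $2r$; $V\rtimes_\psi D$ is the semidirect product where $D$ acts on $V=\mathbb{F}_p^d$ via $\psi$, and $\mathrm{C}_V(x)$ is the centralizer of $x$ in $V$. For a group $G$ and $\rho,\tau\in G$ with $G=\langle\rho,\tau\rangle$ and $|\tau|=2$ (a rotary pair), $\mathsf{RotaMap}(G,\rho,\tau)$ is the map whose vertices, edges and faces are the left cosets of $\langle\rho\rangle$, $\langle\tau\rangle$ and $\langle\rho\tau\rangle$ in $G$ respectively, two objects being incident iff their intersection is nonempty; it is an orientable map on which $G$ acts (by left multiplication) regularly on arcs with cyclic vertex and face stabilizers. Isomorphism means isomorphism of maps. *)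

(* Defs.v *)
From HB Require Import structures.
From mathcomp Require Import all_boot all_fingroup all_solvable.
Set Implicit Arguments. Unset Strict Implicit. Unset Printing Implicit Defensive.
Local Open Scope group_scope.

Section RotaMap.
Variable gT : finGroupType.
Implicit Types (G : {group gT}) (rho tau : gT) (A B : {set gT}).

Definition rm_vertices G rho : {set {set gT}} := lcosets <[rho]> G.
Definition rm_edges G tau : {set {set gT}} := lcosets <[tau]> G.
Definition rm_faces G rho tau : {set {set gT}} := lcosets <[rho * tau]> G.

Definition rm_incident A B : bool := A :&: B != set0.

Definition bij_onto (f : {set gT} -> {set gT}) (X Y : {set {set gT}}) : Prop :=
  {in X &, injective f} /\ f @: X = Y.

Definition rotamap_iso G rho tau rho' tau' : Prop :=
  exists (fv fe ff : {set gT} -> {set gT}),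
    [/\ bij_onto fv (rm_vertices G rho) (rm_vertices G rho'),
        bij_onto fe (rm_edges G tau) (rm_edges G tau') &
        bij_onto ff (rm_faces G rho tau) (rm_faces G rho' tau')] /\
    [/\
        {in rm_vertices G rho & rm_edges G tau, forall a b,
            rm_incident (fv a) (fe b) = rm_incident a b},
        {in rm_vertices G rho & rm_faces G rho tau, forall a b,
            rm_incident (fv a) (ff b) = rm_incident a b} &
        {in rm_edges G tau & rm_faces G rho tau, forall a b,
            rm_incident (fe a) (ff b) = rm_incident a b}].
End RotaMap.

(* Main.v *)
Require Import Defs.
From HB Require Import structures.
From mathcomp Require Import all_boot all_fingroup all_solvable.
Set Implicit Arguments. Unset Strict Implicit. Unset Printing Implicit Defensive.
Local Open Scope group_scope.

Section Gen.
Variables (gT : finGroupType) (G : {group gT}) (f : {morphism G >-> gT}).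
Hypotheses (injf : 'injm f) (imf : f @* G = G).

Lemma coset_sub h A : h \in G -> A \in lcosets <[h]> G -> A \subset G.
Proof.
by move=> Gh /lcosetsP[g Gg ->]; rewrite mul_subG ?sub1set ?cycle_subG.
Qed.

Lemma im_coset g h : g \in G -> h \in G -> f @* (g *: <[h]>) = f g *: <[f h]>.
Proof. by move=> Gg Gh; rewrite morphimMl ?sub1set // morphim_set1 // morphim_cycle. Qed.

Lemma im_cosets h : h \in G ->
  (fun A => f @* A) @: lcosets <[h]> G = lcosets <[f h]> G.
Proof.
move=> Gh; apply/setP => B; apply/imsetP/lcosetsP.
- case=> A /lcosetsP[g Gg ->] ->; exists (f g); last by rewrite im_coset.
  by have := mem_morphim f Gg Gg; rewrite imf.
- case=> g' G'g ->; rewrite -imf in G'g; case/morphimP: G'g => g Gg _ ->.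
  exists (g *: <[h]>); first by apply/lcosetsP; exists g.
  by rewrite im_coset.
Qed.

Lemma bij_cosets h : h \in G ->
  bij_onto (fun A => f @* A) (lcosets <[h]> G) (lcosets <[f h]> G).
Proof.
move=> Gh; split; last exact: im_cosets.
move=> A B /(coset_sub Gh) sA /(coset_sub Gh) sB; exact: injm_morphim_inj.
Qed.

Lemma inc_cosets h A B : h \in G -> A \in lcosets <[h]> G ->
  rm_incident (f @* A) (f @* B) = rm_incident A B.
Proof.
move=> Gh /(coset_sub Gh) sA; rewrite /rm_incident -(injmI injf) morphim_eq0 //.
exact: subset_trans (subsetIl _ _) sA.
Qed.

Lemma iso_of_morph rho tau : rho \in G -> tau \in G ->
  rotamap_iso G rho tau (f rho) (f tau).
Proof.
move=> Gr Gt; have Grt : rho * tau \in G by rewrite groupM.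
exists (fun A => f @* A), (fun A => f @* A), (fun A => f @* A); split.
  split; [exact: bij_cosets | exact: bij_cosets |].
  by rewrite /rm_faces -morphM //; apply: bij_cosets.
split=> a b Ha Hb; [exact: (inc_cosets _ Gr) | exact: (inc_cosets _ Gr) | exact: (inc_cosets _ Gt)].
Qed.
End Gen.

Section Main.
Variables (gT : finGroupType) (V : {group gT}) (x y : gT).
Hypotheses (abV : abelian V) (nVx : x \in 'N(V)) (nVy : y \in 'N(V))
  (xx : x * x = 1) (yy : y * y = 1).

Lemma cV a b : a \in V -> b \in V -> a * b = b * a.
Proof. by move=> Va Vb; apply/esym/(centsP abV). Qed.

Lemma swap4 a b c e : a \in V -> b \in V -> c \in V -> e \in V ->
  a * b * (c * e) = a * c * (b * e).
Proof.
by move=> Va Vb Vc Ve; rewrite !mulgA -(mulgA a b) (cV Vb Vc) mulgA.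
Qed.

Lemma JV a g : g \in 'N(V) -> a \in V -> a ^ g \in V.
Proof. by move=> nV Va; rewrite memJ_norm. Qed.

Definition endo (f : {ffun gT -> gT}) : bool :=
  [forall a, (a \in V) ==> [&& f a \in V, f (a ^ x) == f a ^ x,
     f (a ^ y) == f a ^ y & [forall b, (b \in V) ==> (f (a * b) == f a * f b)]]].

Lemma endoP (f : {ffun gT -> gT}) : reflect (forall a, a \in V -> [/\ f a \in V, f (a ^ x) = f a ^ x,
     f (a ^ y) = f a ^ y & forall b, b \in V -> f (a * b) = f a * f b]) (endo f).
Proof.
apply: (iffP forallP) => H a.
  move=> Va; have /implyP/(_ Va)/and4P[-> /eqP-> /eqP-> /forallP Hb] := H a.
  by split=> // b Vb; apply/eqP/(implyP (Hb b)).
apply/implyP => Va; have [-> -> -> Hb] := H a Va; rewrite !eqxx /=.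
by apply/forallP => b; apply/implyP => Vb; rewrite Hb.
Qed.

Lemma endo_id : endo [ffun a => a].
Proof. by apply/endoP => a Va; rewrite !ffunE; split=> // b _; rewrite !ffunE. Qed.

Lemma endo_one : endo [ffun _ => 1].
Proof. by apply/endoP => a Va; rewrite !ffunE !conj1g; split=> // b _; rewrite !ffunE mulg1. Qed.

Lemma endo_mul (f g : {ffun gT -> gT}) : endo f -> endo g -> endo [ffun a => f a * g a].
Proof.
move=> /endoP Hf /endoP Hg; apply/endoP => a Va.
have [Vfa fx fy fM] := Hf a Va; have [Vga gx gy gM] := Hg a Va.
rewrite !ffunE fx fy gx gy !conjMg groupM //; split=> // b Vb.
have [Vfb _ _ _] := Hf b Vb; have [Vgb _ _ _] := Hg b Vb.
by rewrite !ffunE fM // gM // swap4.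
Qed.

Lemma endo_inv (f : {ffun gT -> gT}) : endo f -> endo [ffun a => (f a)^-1].
Proof.
move=> /endoP Hf; apply/endoP => a Va.
have [Vfa fx fy fM] := Hf a Va.
rewrite !ffunE fx fy !conjVg groupV //; split=> // b Vb.
have [Vfb _ _ _] := Hf b Vb.
by rewrite !ffunE fM // invMg cV ?groupV.
Qed.

Lemma endo_s (f : {ffun gT -> gT}) : endo f -> endo [ffun a => f a ^ (x * y) * f a ^ (y * x)].
Proof.
move=> /endoP Hf; have nxy : x * y \in 'N(V) by rewrite groupM.
have nyx : y * x \in 'N(V) by rewrite groupM.
apply/endoP => a Va; have [Vfa fx fy fM] := Hf a Va.
rewrite !ffunE fx fy -!conjgM !(conjMg (f a ^ _)) -!conjgM groupM ?JV //; split=> //.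
- by rewrite (mulgA x x y) xx mul1g -(mulgA y x x) xx mulg1 (mulgA x y x) cV ?JV ?groupM.
- by rewrite (mulgA y y x) yy mul1g -(mulgA x y y) yy mulg1 (mulgA y x y) cV ?JV ?groupM.
move=> b Vb; have [Vfb _ _ _] := Hf b Vb.
by rewrite !ffunE fM // !conjMg swap4 ?JV.
Qed.

Variable v : gT.
Hypotheses (Vv : v \in V) (vx : v ^ x = v) (v1 : v != 1)
  (irr : forall H : {group gT}, H \subset V -> H :!=: 1 ->
           x \in 'N(H) -> y \in 'N(H) -> H :=: V)
  (ncV : forall u, u \in V -> <[u]> :!=: V).

Lemma ncyc (u g : gT) : u ^ g \in <[u]> -> g \in 'N(<[u]>).
Proof. by move=> H; rewrite inE -cycleJ cycle_subG. Qed.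

Lemma Z_trivial b : b \in V -> b ^ x = b -> b ^ (y * x * y) = b -> b = 1.
Proof.
move=> Vb bx bz.
pose Z := [set c in V | (c ^ x == c) && (c ^ (y * x * y) == c)].
have gZ : group_set Z.
  apply/group_setP; split; first by rewrite !inE group1 !conj1g !eqxx.
  move=> c e; rewrite !inE => /and3P[Vc /eqP cx /eqP cz] /and3P[Ve /eqP ex /eqP ez].
  by rewrite groupM // !(conjMg c e) cx cz ex ez !eqxx.
have ZV : Group gZ \subset V by apply/subsetP=> c; rewrite inE => /andP[].
case: (eqVneq (Group gZ : {set gT}) 1) => [Z1|Zn1].
  have : b \in Group gZ by rewrite inE Vb bx bz !eqxx.
  by rewrite Z1 => /set1P.
exfalso.
have nZx : x \in 'N(Group gZ).
  rewrite inE; apply/subsetP => _ /imsetP[c Zc ->].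
  by move: (Zc); rewrite inE => /and3P[_ /eqP -> _].
have nZy : y \in 'N(Group gZ).
  rewrite inE; apply/subsetP => _ /imsetP[c Zc ->].
  move: Zc; rewrite inE => /and3P[Vc /eqP cx /eqP cz].
  rewrite !inE JV //= -!conjgM.
  have e1 : y * x = y * x * y * y by rewrite -mulgA yy mulg1.
  have e2 : y * (y * x * y) = x * y by rewrite !mulgA yy mul1g.
  by rewrite e2 (conjgM c x y) cx eqxx andbT e1 conjgM cz.
have ZeqV := irr ZV Zn1 nZx nZy.
have fixV c : c \in V -> c ^ x = c.
  move=> Vc; have : c \in Group gZ by rewrite ZeqV.
  by rewrite inE => /and3P[_ /eqP].
have Vvy : v ^ y \in V by rewrite JV.
case: (eqVneq (v * v ^ y) 1) => [u1|un1].
  have vy : v ^ y = v^-1 by rewrite -(mulKg v (v ^ y)) u1 mulg1.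
  apply/negP: (ncV Vv); rewrite negbK; apply/eqP/irr.
  - by rewrite cycle_subG.
  - by rewrite cycle_eq1.
  - by apply: ncyc; rewrite vx cycle_id.
  - by apply: ncyc; rewrite vy groupV cycle_id.
have Vu : v * v ^ y \in V by rewrite groupM.
apply/negP: (ncV Vu); rewrite negbK; apply/eqP/irr.
- by rewrite cycle_subG.
- by rewrite cycle_eq1.
- by apply: ncyc; rewrite fixV // cycle_id.
- by apply: ncyc; rewrite conjMg -conjgM yy conjg1 cV // cycle_id.
Qed.

Lemma C_sub_R w : w \in V -> w ^ x = w -> exists2 f, endo f & f v = w.
Proof.
move=> Vw wx.
have Ef f : endo f -> f v \in V by move/endoP=> H; case: (H v Vv).
have Efx f : endo f -> (f v) ^ x = f v by move/endoP=> H; case: (H v Vv) => _ <-; rewrite vx.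
have Ew f g : endo f -> endo g -> f v * (g v) ^ y \in V.
  by move=> ef eg; rewrite groupM ?JV ?Ef.
pose U := [set w in V | [exists f, exists g, [&& endo f, endo g & w == f v * (g v) ^ y]]].
have gU : group_set U.
  apply/group_setP; split.
    rewrite inE group1; apply/existsP; exists [ffun _ => 1]; apply/existsP.
    by exists [ffun _ => 1]; rewrite endo_one !ffunE conj1g mulg1 eqxx.
  move=> a b; rewrite !inE => /andP[Va /existsP[f1 /existsP[g1 /and3P[e1 e1' /eqP ->]]]].
  move=> /andP[Vb /existsP[f2 /existsP[g2 /and3P[e2 e2' /eqP ->]]]].
  rewrite groupM ?(Ew f1 g1) ?(Ew f2 g2) //=. apply/existsP. exists [ffun a => f1 a * f2 a]. apply/existsP.
  exists [ffun a => g1 a * g2 a]; rewrite !endo_mul //= !ffunE conjMg swap4 ?JV ?Ef //.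
have UV : Group gU \subset V by apply/subsetP=> c; rewrite inE => /andP[].
have vU : v \in Group gU.
  rewrite inE Vv; apply/existsP; exists [ffun a => a]; apply/existsP.
  by exists [ffun _ => 1]; rewrite endo_id endo_one !ffunE conj1g mulg1 eqxx.
have U1 : (Group gU :!=: 1).
  by apply/eqP => U1; move: vU; rewrite U1 => /set1P/eqP; rewrite (negPf v1).
have nUy : y \in 'N(Group gU).
  rewrite inE; apply/subsetP => _ /imsetP[c Uc ->].
  move: Uc; rewrite inE => /andP[Vc /existsP[f /existsP[g /and3P[ef eg /eqP ->]]]].
  rewrite inE JV ?Ew //=; apply/existsP; exists g; apply/existsP; exists f.
  rewrite ef eg /= conjMg -conjgM yy conjg1 cV ?JV ?Ef //.
have nUx : x \in 'N(Group gU).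
  rewrite inE; apply/subsetP => _ /imsetP[c Uc ->].
  move: Uc; rewrite inE => /andP[Vc /existsP[f /existsP[g /and3P[ef eg /eqP ->]]]].
  rewrite inE JV ?Ew //=; apply/existsP.
  exists [ffun a => f a * [ffun b => g b ^ (x * y) * g b ^ (y * x)] a]; apply/existsP.
  exists [ffun a => (g a)^-1]; rewrite (endo_mul ef (endo_s eg)) (endo_inv eg) /= !ffunE.
  rewrite (conjMg (f v)) Efx // -conjgM (conjgM (g v) x y) Efx // conjVg.
  have nyx : y * x \in 'N(V) by rewrite groupM.
  have -> : g v ^ y * g v ^ (y * x) = g v ^ (y * x) * g v ^ y.
    by apply: cV; rewrite JV ?Ef.
  by rewrite -(mulgA (f v)) -(mulgA (g v ^ (y * x))) mulgV mulg1.
have UeqV := irr UV U1 nUx nUy.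
have : w \in Group gU by rewrite UeqV.
rewrite inE => /andP[_ /existsP[f /existsP[g /and3P[ef eg /eqP ew]]]].
exists f => //.
have b1 : g v = 1.
  apply: Z_trivial; [exact: Ef | exact: Efx |].
  move: wx; rewrite ew conjMg Efx // => /mulgI.
  by rewrite !conjgM => ->; rewrite -conjgM yy conjg1.
by rewrite ew b1 conj1g mulg1.
Qed.

End Main.

Theorem proposition3p2 (gT : finGroupType) (p r d : nat)
    (G V D : {group gT}) (x y v v' : gT) :
  prime p -> odd p -> 3 <= r -> ~~ (p %| r) -> 2 <= d ->
  p.-abelem V -> #|V| = (p ^ d)%N ->
  V ><| D = G ->
  D \isog 'D_(2 * r)%N ->
  acts_irreducibly D V 'J ->
  x \in D -> y \in D -> #[x] = 2 -> #[y] = 2 -> D :=: <<[set x; y]>> ->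
  v \in 'C_V[x] -> v != 1 -> v' \in 'C_V[x] -> v' != 1 ->
  rotamap_iso G (v * x) y (v' * x) y.
Proof.
move=> pr_p odd_p r3 npr d2 abelV cardV defG isoD irrD Dx Dy ox oy Dgen Cv v1 Cv' v'1.
case/sdprodP: (defG) => _ eVD nVD tiVD.
have abV := abelem_abelian abelV.
have nVx : x \in 'N(V) := subsetP nVD x Dx.
have nVy : y \in 'N(V) := subsetP nVD y Dy.
have xx : x * x = 1 by have := expg_order x; rewrite ox expgS expg1.
have yy : y * y = 1 by have := expg_order y; rewrite oy expgS expg1.
have irr : forall H : {group gT}, H \subset V -> H :!=: 1 ->
           x \in 'N(H) -> y \in 'N(H) -> H :=: V.
  move=> H sHV nt nHx nHy; case/mingroupP: irrD => _ minV; apply: minV sHV.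
  by rewrite nt /= astabsJ Dgen gen_subG subUset !sub1set nHx nHy.
have ncV : forall u, u \in V -> <[u]> :!=: V.
  move=> u Vu; apply/eqP => eu.
  have : #|V| %| p.
    case/and3P: abelV => _ _ eV; rewrite -eu -orderE.
    exact: dvdn_trans (dvdn_exponent Vu) eV.
  rewrite cardV => /(dvdn_leq (prime_gt0 pr_p)).
  rewrite -{2}(expn1 p) leq_exp2l ?prime_gt1 // => d1.
  by have := leq_trans d2 d1.
case/setIP: Cv => Vv /cent1P cvx.
case/setIP: Cv' => Vv' /cent1P cv'x.
have vx : v ^ x = v by rewrite conjgE cvx mulKg.
have v'x : v' ^ x = v' by rewrite conjgE cv'x mulKg.
have [f ef fv'] := C_sub_R abV nVx nVy xx yy Vv vx v1 irr ncV Vv' v'x.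
have fP := endoP V x y f; move: ef => /fP Hf.
have fV a : a \in V -> f a \in V by move=> Va; case: (Hf a Va).
have fM : {in V &, {morph (fun a => f a) : a b / a * b}}.
  by move=> a b Va Vb; case: (Hf a Va) => _ _ _ ->.
have fD : {in D, forall g, {in V, forall a, f (a ^ g) = f a ^ g}}.
  pose Cm := [set g in 'N(V) | [forall a, (a \in V) ==> (f (a ^ g) == f a ^ g)]].
  have gCm : group_set Cm.
    apply/group_setP; split.
      rewrite inE group1 /=; apply/forallP => a; apply/implyP => _.
      by rewrite !conjg1.
    move=> g h /setIdP[Ng /forallP Hg] /setIdP[Nh /forallP Hh].
    rewrite inE groupM //=; apply/forallP => a; apply/implyP => Va.
    rewrite !conjgM (eqP (implyP (Hh _) (JV Ng Va))).
    by rewrite (eqP (implyP (Hg _) Va)).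
  have sD : D \subset Group gCm.
    rewrite Dgen gen_subG subUset !sub1set.
    apply/andP; split; apply/setIdP; split => //; apply/forallP => a;
      apply/implyP => Va; case: (Hf a Va) => _ hx hy _; by rewrite ?hx ?hy.
  move=> g Dg a Va; have := subsetP sD g Dg; rewrite inE => /andP[_ /forallP H].
  exact/eqP/(implyP (H a)).
pose fm := @Morphism gT gT V (fun a => f a) fM.
have actf : {in V & D, morph_act 'J 'J fm (idm D)}.
  by move=> a b Va Db; rewrite /= fD.
have injf : 'injm fm.
  pose K := [set a in V | f a == 1].
  have gK : group_set K.
    apply/group_setP; split.
      by rewrite inE group1 /=; have /= -> := morph1 fm.
    move=> a b; rewrite !inE => /andP[Va /eqP fa] /andP[Vb /eqP fb].
    by rewrite groupM //= fM // fa fb mulg1.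
  have sKV : Group gK \subset V by apply/subsetP=> a; rewrite inE => /andP[].
  have K1 : (Group gK : {set gT}) = 1.
    apply/eqP; apply: contraR v'1 => nt.
    have := irr _ sKV nt.
    have nK g : g \in D -> g \in 'N(Group gK).
      move=> Dg; rewrite inE; apply/subsetP => _ /imsetP[a Ka ->].
      move: Ka; rewrite inE => /andP[Va /eqP fa].
      by rewrite inE JV ?(subsetP nVD) //= fD // fa conj1g.
    move=> /(_ (nK x Dx) (nK y Dy)) KV.
    have : v \in Group gK by rewrite KV.
    by rewrite inE -fv' => /andP[_ ->].
  apply/subsetP => a; rewrite !inE => /andP[Va fa1].
  have : a \in Group gK by rewrite inE Va fa1.
  by rewrite K1 => /set1P ->.
pose phi := sdprodm defG actf.
have injphi : 'injm phi.
  rewrite injm_sdprodm injf injm_idm morphim_idm //=.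
  apply/eqP/trivgP; rewrite -tiVD setSI //.
  by apply/subsetP => _ /morphimP[a _ Va ->]; apply: fV.
have imphi : phi @* G = G.
  apply/eqP; rewrite eqEcard card_injm // leqnn andbT.
  rewrite im_sdprodm morphim_idm //.
  have sub : V * D \subset G by rewrite eVD.
  apply: subset_trans (mulgSS _ (subxx D)) sub.
  by apply/subsetP => _ /morphimP[a _ Va ->]; apply: fV.
have Gvx : v * x \in G by rewrite -eVD mem_mulg.
have Gy : y \in G by rewrite -eVD -(mul1g y) mem_mulg.
have := iso_of_morph injphi imphi Gvx Gy.
have e1 : sdprodm_morphism defG actf (v * x) = v' * x.
  by rewrite [LHS]/= sdprodmE //= fv'.
have e2 : sdprodm_morphism defG actf y = y by rewrite [LHS]/= sdprodmEr.
by rewrite /phi e1 e2.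
Qed.
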